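(* Let $k\in\mathbb{N}$ with $\gcd(k,6)=2$, let $h$ be an integer with $\gcd(h,k)=1$, and let $h'$ be an integer with $hh'\equiv-1\pmod{4k}$ and $3\mid h'$. Then $$\frac{\omega_{3h,\frac{k}{2}}\,\omega_{h,\frac{k}{2}}\,\omega_{h,k}}{\omega_{3h,k}}=\exp\!\left( \frac{2\pi i}{36k} \left( h (9+9k) + h'(-5+2k^2) \right)\right)$$ and $$\frac{\omega_{3h,k}\,\omega_{h,\frac{k}{2}}\,\omega_{h,k}}{\omega_{3h,\frac{k}{2}}^3} =-\exp\!\left( -\frac{2\pi i}{18k} \left(h ( 9+9k) + h'(1-k^2) \right)\right).$$
   Context: For coprime integers $h$ and $K\ge1$, $\omega_{h,K}=\exp(\pi i\, s(h,K))$, where $s(h,K)=\sum_{r=1}^{K-1}\frac{r}{K}\left(\frac{hr}{K}-\lfloor \frac{hr}{K}\rfloor-\frac12\right)$ is the Dedekind sum (the multiplier of the Dedekind eta function; equivalently given by Rademacher's explicit formula in terms of Kronecker symbols and an integer $\tilde h$ with $h\tilde h\equiv-1\pmod K$). *)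

(* Defs.v *)
From Stdlib Require Import Reals ZArith List.
From Coquelicot Require Import Coquelicot.
Open Scope R_scope.

Definition cexpi (t : R) : C := (cos t, sin t).

(* Dedekind sum s(h,K) = sum_{r=1}^{K-1} (r/K) (hr/K - floor(hr/K) - 1/2),
   for K >= 1; floor(hr/K) = Z.div (h*r) K since K > 0 (Z.div floors). *)
Definition dedekind_sum (h K : Z) : R :=
  fold_right Rplus 0
    (map (fun n : nat =>
            let r := Z.of_nat n in
            (IZR r / IZR K) *
            (IZR h * IZR r / IZR K - IZR (Z.div (h * r) K) - 1 / 2))
         (seq 1 (Z.to_nat K - 1))).

Definition omega (h K : Z) : C := cexpi (PI * dedekind_sum h K).

(* Main.v *)
Require Import Defs.
From Stdlib Require Import Reals ZArith.
From Coquelicot Require Import Coquelicot.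
From Stdlib Require Import List Znumtheory Lia Lra Permutation.
Open Scope R_scope.

Module ZPart.
Local Open Scope Z_scope.

Definition rng (n : nat) : list Z := map Z.of_nat (seq 1 n).
Definition sumL (l : list Z) : Z := fold_right Z.add 0 l.
Definition sZ (f : Z -> Z) (n : nat) : Z := sumL (map f (rng n)).

Lemma sumL_app l1 l2 : sumL (l1 ++ l2) = sumL l1 + sumL l2.
Proof. induction l1; simpl; [lia|]. unfold sumL in *; simpl; lia. Qed.

Lemma sumL_perm l1 l2 : Permutation l1 l2 -> sumL l1 = sumL l2.
Proof. induction 1; unfold sumL in *; simpl; lia. Qed.

Lemma in_rng n r : In r (rng n) <-> 1 <= r <= Z.of_nat n.
Proof.
  unfold rng; rewrite in_map_iff; split.
  - intros [x [<- Hx]]. apply in_seq in Hx. lia.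
  - intros H. exists (Z.to_nat r). split; [lia|]. apply in_seq. lia.
Qed.

Lemma NoDup_rng n : NoDup (rng n).
Proof.
  unfold rng. apply FinFun.Injective_map_NoDup; [intros x y; lia|]. apply seq_NoDup.
Qed.

Lemma sZ_S f n : sZ f (S n) = sZ f n + f (Z.of_nat (S n)).
Proof.
  unfold sZ, rng. rewrite seq_S, !map_app, sumL_app. simpl. unfold sumL at 2; simpl.
  f_equal. f_equal. lia.
Qed.

Lemma sZ_0 f : sZ f 0 = 0.
Proof. reflexivity. Qed.

Lemma sZ_ext f g n : (forall r, 1 <= r <= Z.of_nat n -> f r = g r) -> sZ f n = sZ g n.
Proof.
  induction n; intros H; [reflexivity|]. rewrite !sZ_S, IHn; [|intros; apply H; lia].
  rewrite H; [reflexivity|lia].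
Qed.

Lemma sZ_add f g n : sZ (fun r => f r + g r) n = sZ f n + sZ g n.
Proof. induction n; [reflexivity|]. rewrite !sZ_S, IHn. lia. Qed.

Lemma sZ_scal c f n : sZ (fun r => c * f r) n = c * sZ f n.
Proof. induction n; [rewrite !sZ_0; lia|]. rewrite !sZ_S, IHn. lia. Qed.

Lemma sZ_sub f g n : sZ (fun r => f r - g r) n = sZ f n - sZ g n.
Proof.
  rewrite (sZ_ext _ (fun r => f r + (-1) * g r)) by (intros; lia).
  rewrite sZ_add, sZ_scal. lia.
Qed.

Lemma sZ_const c n : sZ (fun _ => c) n = c * Z.of_nat n.
Proof. induction n; [rewrite !sZ_0; lia|]. rewrite !sZ_S, IHn. lia. Qed.

Lemma sZ_id n : 2 * sZ (fun r => r) n = Z.of_nat n * (Z.of_nat n + 1).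
Proof. induction n; [reflexivity|]. rewrite !sZ_S. lia. Qed.

Lemma sZ_sq n : 6 * sZ (fun r => r * r) n = Z.of_nat n * (Z.of_nat n + 1) * (2 * Z.of_nat n + 1).
Proof. induction n; [reflexivity|]. rewrite !sZ_S. nia. Qed.

Lemma sZ_perm f g n :
  (forall r, 1 <= r <= Z.of_nat n -> 1 <= g r <= Z.of_nat n) ->
  (forall r1 r2, 1 <= r1 <= Z.of_nat n -> 1 <= r2 <= Z.of_nat n -> g r1 = g r2 -> r1 = r2) ->
  sZ (fun r => f (g r)) n = sZ f n.
Proof.
  intros Hr Hi. unfold sZ.
  assert (P : Permutation (map g (rng n)) (rng n)).
  { apply Permutation_map_same_l.
    - apply FinFun.Injective_map_NoDup_in; [|apply NoDup_rng].
      intros x y Hx Hy. apply in_rng in Hx, Hy. apply Hi; auto.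
    - intros y Hy. apply in_map_iff in Hy. destruct Hy as [x [<- Hx]].
      apply in_rng in Hx. apply in_rng. auto. }
  rewrite <- (map_map g f). apply sumL_perm. apply Permutation_map. exact P.
Qed.

Lemma sZ_split f a b : sZ f (a + b) = sZ f a + sZ (fun r => f (Z.of_nat a + r)) b.
Proof.
  induction b.
  - rewrite Nat.add_0_r, sZ_0. lia.
  - rewrite Nat.add_succ_r, !sZ_S, IHb, Z.add_assoc. f_equal. f_equal. lia.
Qed.

Lemma sZ_div d f g n : (forall r, 1 <= r <= Z.of_nat n -> (d | f r - g r)) -> (d | sZ f n - sZ g n).
Proof.
  induction n; intros H.
  - simpl. apply Z.divide_0_r.
  - rewrite !sZ_S. replace (sZ f n + f (Z.of_nat (S n)) - (sZ g n + g (Z.of_nat (S n))))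
      with ((sZ f n - sZ g n) + (f (Z.of_nat (S n)) - g (Z.of_nat (S n)))) by lia.
    apply Z.divide_add_r; [apply IHn; intros; apply H; lia| apply H; lia].
Qed.

Definition Tt c K := sZ (fun r => r * (c*r/K)) (Z.to_nat (K-1)).
Definition Qq c K := sZ (fun r => (c*r/K)*(c*r/K)) (Z.to_nat (K-1)).
Definition Gg c K := sZ (fun r => c*r/K) (Z.to_nat ((K-1)/2)).

Lemma div_eq a b q r : 0 <= r < b -> a = b*q + r -> a / b = q.
Proof. intros. symmetry. eapply Z.div_unique_pos; eauto. Qed.

Lemma rho_nz K c r : 0 < K -> rel_prime c K -> 0 < r < K -> (c*r) mod K <> 0.
Proof.
  intros HK Hc Hr H. apply Z.mod_divide in H; [|lia].
  apply Gauss in H; [|apply rel_prime_sym; auto].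
  destruct H as [x Hx]. subst r. destruct (Z.le_gt_cases x 0); nia.
Qed.

Lemma divK_small K x : 0 < K -> (K | x) -> -K < x < K -> x = 0.
Proof. intros HK [y Hy] H. subst x. destruct (Z.le_gt_cases y 0); [destruct (Z.le_gt_cases y (-1))|]; nia. Qed.

Lemma rho_inj K c r1 r2 : 0 < K -> rel_prime c K -> 0 < r1 < K -> 0 < r2 < K ->
  (c*r1) mod K = (c*r2) mod K -> r1 = r2.
Proof.
  intros HK Hc H1 H2 H.
  assert (D : (K | c * (r1 - r2))).
  { pose proof (Z.div_mod (c*r1) K ltac:(lia)). pose proof (Z.div_mod (c*r2) K ltac:(lia)).
    exists (c*r1/K - c*r2/K). nia. }
  apply Gauss in D; [|apply rel_prime_sym; auto].
  apply divK_small in D; lia.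
Qed.

Lemma F1 c K : 0 < K -> rel_prime c K ->
  12*c*Tt c K = (c*c-1)*(K-1)*(2*K-1) + 6*K*Qq c K.
Proof.
  intros HK Hc. unfold Tt, Qq. set (n := Z.to_nat (K-1)).
  assert (Hn : Z.of_nat n = K - 1) by (unfold n; lia).
  assert (Hp : sZ (fun r => ((c*r) mod K) * ((c*r) mod K)) n = sZ (fun x => x*x) n).
  { apply (sZ_perm (fun x => x*x) (fun r => (c*r) mod K)).
    - intros r Hr. pose proof (Z.mod_pos_bound (c*r) K HK). pose proof (rho_nz K c r HK Hc ltac:(lia)). lia.
    - intros r1 r2 H1 H2 H. apply (rho_inj K c); auto; lia. }
  rewrite (sZ_ext _ (fun r => (c*c) * (r*r) + (-2*c*K) * (r * (c*r/K)) + (K*K) * ((c*r/K)*(c*r/K)))) in Hp.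
  2:{ intros r _. pose proof (Z.div_mod (c*r) K ltac:(lia)).
      replace ((c*r) mod K) with (c*r - K*(c*r/K)) by lia. ring. }
  rewrite !sZ_add, !sZ_scal in Hp.
  pose proof (sZ_sq n) as S2. rewrite Hn in S2.
  set (A := sZ (fun x => x*x) n) in *.
  set (B := sZ (fun r => r * (c*r/K)) n) in *.
  set (C := sZ (fun r => (c*r/K)*(c*r/K)) n) in *.
  apply (Z.mul_reg_l _ _ K); [lia|].
  replace (K * (12*c*B)) with (6 * (2*c*K*B)) by ring.
  replace (2*c*K*B) with ((c*c - 1)*A + K*K*C) by lia.
  replace (6 * ((c*c-1)*A + K*K*C)) with ((c*c-1)*(6*A) + 6*K*K*C) by ring.
  rewrite S2. ring.
Qed.

Lemma rev_sum f L : 0 <= L -> sZ (fun r => f (L + r)) (Z.to_nat L) = sZ (fun r => f (2*L + 1 - r)) (Z.to_nat L).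
Proof.
  intros HL.
  rewrite (sZ_ext (fun r => f (2*L+1-r)) (fun r => (fun x => f (L + x)) (L + 1 - r))) by (intros; f_equal; lia).
  symmetry. apply (sZ_perm (fun x => f (L + x)) (fun r => L + 1 - r)); intros; lia.
Qed.

Lemma pair_odd f L : 0 <= L ->
  sZ f (Z.to_nat (2*L+1-1)) = sZ (fun r => f r + f (2*L+1 - r)) (Z.to_nat L).
Proof.
  intros HL. replace (Z.to_nat (2*L+1-1)) with (Z.to_nat L + Z.to_nat L)%nat by lia.
  rewrite sZ_split, sZ_add. f_equal. rewrite Z2Nat.id by lia.
  rewrite rev_sum by lia. apply sZ_ext; intros; f_equal; lia.
Qed.

Lemma pair_even f L : 0 <= L ->
  sZ f (Z.to_nat (2*L+2-1)) = sZ (fun r => f r + f (2*L+2 - r)) (Z.to_nat L) + f (L+1).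
Proof.
  intros HL. replace (Z.to_nat (2*L+2-1)) with (S (Z.to_nat L) + Z.to_nat L)%nat by lia.
  rewrite sZ_split, sZ_S, sZ_add.
  assert (E : sZ (fun r => f (Z.of_nat (S (Z.to_nat L)) + r)) (Z.to_nat L) = sZ (fun r => f (2*L+2-r)) (Z.to_nat L)).
  { assert (R := rev_sum (fun x => f (1+x)) L HL). cbv beta in R.
    transitivity (sZ (fun r => f (1 + (L + r))) (Z.to_nat L)).
    - apply sZ_ext; intros; f_equal; lia.
    - rewrite R. apply sZ_ext; intros; f_equal; lia. }
  rewrite E. replace (Z.of_nat (S (Z.to_nat L))) with (L+1) by lia. lia.
Qed.

Lemma pair_oddK f K L : K = 2*L+1 -> 0 <= L ->
  sZ f (Z.to_nat (K-1)) = sZ (fun r => f r + f (K - r)) (Z.to_nat L).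
Proof. intros -> HL. apply pair_odd; auto. Qed.

Lemma pair_evenK f K L : K = 2*L+2 -> 0 <= L ->
  sZ f (Z.to_nat (K-1)) = sZ (fun r => f r + f (K - r)) (Z.to_nat L) + f (L+1).
Proof. intros -> HL. apply pair_even; auto. Qed.
Lemma qrev K c r : 0 < K -> rel_prime c K -> 0 < r < K -> c*(K-r)/K = c - 1 - c*r/K.
Proof.
  intros HK Hc Hr. pose proof (rho_nz K c r HK Hc Hr). pose proof (Z.mod_pos_bound (c*r) K HK).
  pose proof (Z.div_mod (c*r) K ltac:(lia)).
  apply (div_eq _ _ _ (K - (c*r) mod K)); [lia|]. nia.
Qed.

Lemma even_qq q : (2 | q*(q-1)).
Proof. destruct (Z.Even_or_Odd q) as [[x ->]|[x ->]]; [exists (x*(2*x-1))|exists ((2*x+1)*x)]; ring. Qed.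

Lemma sZ_div0 d f n : (forall r, 1 <= r <= Z.of_nat n -> (d | f r)) -> (d | sZ f n).
Proof.
  intros H. replace (sZ f n) with (sZ f n - sZ (fun _ => 0) n) by (rewrite sZ_const; lia).
  apply sZ_div. intros. rewrite Z.sub_0_r. auto.
Qed.

Lemma Qmod4_odd K c L a : K = 2*L+1 -> 0 <= L -> c = 2*a+1 -> rel_prime c K ->
  (4 | Qq c K - 2 * Gg c K).
Proof.
  intros HK HL Hca Hc. unfold Qq, Gg.
  replace ((K-1)/2) with L by (symmetry; apply (div_eq _ _ _ 0); lia).
  rewrite (pair_oddK _ K L) by lia. rewrite <- sZ_scal, <- sZ_sub.
  apply sZ_div0. intros r Hr. rewrite Z2Nat.id in Hr by lia. rewrite (qrev K c r) by (auto || lia).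
  destruct (even_qq (c*r/K)) as [x Hx].
  exists (a*a - a*(c*r/K) + x). rewrite Hca in *. nia.
Qed.

Lemma Qmod4_even K c L a : K = 2*L+2 -> 0 <= L -> c = 2*a+1 -> rel_prime c K ->
  (4 | Qq c K - 2 * Gg c K - a*a).
Proof.
  intros HK HL Hca Hc. unfold Qq, Gg.
  replace ((K-1)/2) with L by (symmetry; apply (div_eq _ _ _ 1); lia).
  rewrite (pair_evenK _ K L) by lia.
  replace (c * (L+1) / K) with a by (symmetry; apply (div_eq _ _ _ (L+1)); nia).
  match goal with |- (4 | ?X + a*a - ?Y - a*a) => replace (X + a*a - Y - a*a) with (X - Y) by lia end.
  rewrite <- sZ_scal, <- sZ_sub.
  apply sZ_div0. intros r Hr. rewrite Z2Nat.id in Hr by lia. rewrite (qrev K c r) by (auto || lia).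
  destruct (even_qq (c*r/K)) as [x Hx].
  exists (a*a - a*(c*r/K) + x). rewrite Hca in *. nia.
Qed.

Lemma div3 c K r : 0 < K -> 3*c*r/K = 3*(c*r/K) + 3*((c*r) mod K)/K.
Proof.
  intros HK. pose proof (Z.div_mod (c*r) K ltac:(lia)).
  replace (3*c*r) with ((3*(c*r/K))*K + 3*((c*r) mod K)) by lia.
  apply Z.div_add_l. lia.
Qed.

Lemma fold_lemma c K : 0 < K -> rel_prime c K -> rel_prime 3 K ->
  (2 | Gg (3*c) K - Gg c K - Gg 3 K).
Proof.
  intros HK Hc H3. unfold Gg. set (L := (K-1)/2).
  assert (HL : 2*L <= K-1 <= 2*L+1).
  { pose proof (Z.div_mod (K-1) 2 ltac:(lia)). pose proof (Z.mod_pos_bound (K-1) 2 ltac:(lia)). unfold L. lia. }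
  assert (HnL : Z.of_nat (Z.to_nat L) = L) by lia.
  set (rho := fun r => (c*r) mod K).
  set (fld := fun y => if y <=? L then y else K - y).
  set (phi := fun x => 3*x/K).
  assert (Hrho : forall r, 1 <= r <= L -> 1 <= rho r <= K-1 /\ 2 * rho r <> K).
  { intros r Hr. pose proof (rho_nz K c r HK Hc ltac:(lia)). pose proof (Z.mod_pos_bound (c*r) K HK).
    split; [unfold rho; lia|]. intros E.
    assert (D : (K | c * (2*r))).
    { pose proof (Z.div_mod (c*r) K ltac:(lia)). exists (2*(c*r/K)+1). unfold rho in E. nia. }
    apply Gauss in D; [|apply rel_prime_sym; auto]. apply divK_small in D; lia. }
  assert (S1 : sZ (fun r => 3*c*r/K) (Z.to_nat L) = 3 * sZ (fun r => c*r/K) (Z.to_nat L) + sZ (fun r => phi (rho r)) (Z.to_nat L)).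
  { rewrite <- sZ_scal, <- sZ_add. apply sZ_ext. intros r _. apply div3. lia. }
  assert (S2 : (2 | sZ (fun r => phi (rho r)) (Z.to_nat L) - sZ (fun r => phi (fld (rho r))) (Z.to_nat L))).
  { apply sZ_div. intros r Hr. rewrite HnL in Hr. destruct (Hrho r Hr) as [H1 H2].
    unfold fld. destruct (rho r <=? L).
    - exists 0. lia.
    - unfold phi. rewrite (qrev K 3 (rho r)) by (auto || lia). exists (3*rho r/K - 1). lia. }
  assert (S3 : sZ (fun r => phi (fld (rho r))) (Z.to_nat L) = sZ phi (Z.to_nat L)).
  { apply (sZ_perm phi (fun r => fld (rho r))).
    - intros r Hr. rewrite HnL in *. destruct (Hrho r Hr) as [H1 H2]. unfold fld.
      destruct (Z.leb_spec (rho r) L); lia.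
    - intros r1 r2 Hr1 Hr2 E. rewrite HnL in *.
      destruct (Hrho r1 Hr1) as [H11 H12]. destruct (Hrho r2 Hr2) as [H21 H22].
      assert (Hsum : rho r1 + rho r2 <> K).
      { intros E2. assert (D : (K | c * (r1 + r2))).
        { pose proof (Z.div_mod (c*r1) K ltac:(lia)). pose proof (Z.div_mod (c*r2) K ltac:(lia)).
          exists (c*r1/K + c*r2/K + 1). unfold rho in E2. nia. }
        apply Gauss in D; [|apply rel_prime_sym; auto]. apply divK_small in D; lia. }
      unfold fld in E. destruct (Z.leb_spec (rho r1) L); destruct (Z.leb_spec (rho r2) L);
        try (apply (rho_inj K c); auto; unfold rho in *; lia); lia. }
  rewrite S1. rewrite S3 in S2.
  destruct S2 as [x Hx]. exists (sZ (fun r => c * r / K) (Z.to_nat L) + x). lia.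
Qed.

Lemma G3_lemma K : 0 < K -> rel_prime 3 K -> Gg 3 K = (K-1)/2 - K/3.
Proof.
  intros HK H3. unfold Gg. set (L := (K-1)/2). set (j := K/3).
  assert (HL : 2*L <= K-1 <= 2*L+1).
  { pose proof (Z.div_mod (K-1) 2 ltac:(lia)). pose proof (Z.mod_pos_bound (K-1) 2 ltac:(lia)). unfold L. lia. }
  assert (Hj : 3*j < K <= 3*j+2).
  { pose proof (Z.div_mod K 3 ltac:(lia)). pose proof (Z.mod_pos_bound K 3 ltac:(lia)).
    assert (K mod 3 <> 0).
    { intros E. apply Z.mod_divide in E; [|lia]. apply Zgcd_1_rel_prime in H3.
      destruct E as [x Hx]. rewrite Hx, Z.mul_comm, Z.gcd_mul_diag_l in H3 by lia.
      lia. }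
    unfold j. lia. }
  replace (Z.to_nat L) with (Z.to_nat j + Z.to_nat (L - j))%nat by lia.
  rewrite sZ_split.
  rewrite (sZ_ext (fun r => 3*r/K) (fun _ => 0)). 2:{ intros r Hr. apply (div_eq _ _ _ (3*r)); lia. }
  rewrite (sZ_ext (fun r => 3*(Z.of_nat (Z.to_nat j) + r)/K) (fun _ => 1)). 2:{ intros r Hr. apply (div_eq _ _ _ (3*(Z.of_nat (Z.to_nat j) + r) - K)); lia. }
  rewrite !sZ_const. lia.
Qed.

Definition Az (c K : Z) : Z := 2*c*(K-1)*(2*K-1) - 3*K*(K-1).
Definition C1e (m h h' T1 T2 T3 T4 : Z) : Z :=
  6*Az (3*h) m + 6*Az h m + 3*Az h (2*m) - 3*Az (3*h) (2*m) - 72*(T1+T2) - 36*(T3-T4)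
  - 2*(h*(9+18*m) + h'*(8*m*m-5)).
Definition C2e (m h h' T1 T2 T3 T4 : Z) : Z :=
  3*Az (3*h) (2*m) + 6*Az h m + 3*Az h (2*m) - 18*Az (3*h) m - 36*T4 - 72*T2 - 36*T3 + 216*T1
  - 72*m + 4*(h*(9+18*m) + h'*(1-4*m*m)).

Lemma mod_eq a b q r : 0 <= r < b -> a = b*q + r -> a mod b = r.
Proof. intros. symmetry. eapply Z.mod_unique_pos; eauto. Qed.

Lemma case_1_0 (m h h' a b v w t T1 T2 T3 T4 Q1 Q2 Q3 Q4 G1 G2 G3 G4 z1 z2 z3 z4 y1 y2 : Z) :
  m = 6*v+1 -> a = 2*b+0 -> h = 2*a+1 -> h*h' + 1 = w*(8*m) -> h' = t*3 ->
  12*(3*h)*T1 = ((3*h)*(3*h)-1)*(m-1)*(2*m-1) + 6*m*Q1 ->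
  12*h*T2 = (h*h-1)*(m-1)*(2*m-1) + 6*m*Q2 ->
  12*h*T3 = (h*h-1)*(2*m-1)*(2*(2*m)-1) + 6*(2*m)*Q3 ->
  12*(3*h)*T4 = ((3*h)*(3*h)-1)*(2*m-1)*(2*(2*m)-1) + 6*(2*m)*Q4 ->
  (Q1 = 2*G1 + 4*z1) -> (Q2 = 2*G2 + 4*z2) ->
  Q3 = 2*G3 + a*a + 4*z3 -> Q4 = 2*G4 + (3*a+1)*(3*a+1) + 4*z4 ->
  G1 = G2 + ((3*v) - (2*v)) + 2*y1 -> G4 = G3 + ((6*v+1-1) - (4*v)) + 2*y2 ->
  Z.divide (16*m) (3*h*C1e m h h' T1 T2 T3 T4) /\ Z.divide (16*m) (3*h*C2e m h h' T1 T2 T3 T4) /\ Z.divide 9 (C1e m h h' T1 T2 T3 T4) /\ Z.divide 9 (C2e m h h' T1 T2 T3 T4).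
Proof.
  intros Hm Ha Hh Hw Ht E1 E2 E3 E4 HQ1 HQ2 HQ3 HQ4 HG1 HG4.
  assert (Hhw : h*h' = w*(8*m) - 1) by lia.
  split; [|split; [|split]].
  - replace (3*h*C1e m h h' T1 T2 T3 T4) with
      (-6*(12*(3*h)*T1) - 18*(12*h*T2) - 9*(12*h*T3) + 3*(12*(3*h)*T4)
       + 3*h*(6*Az (3*h) m + 6*Az h m + 3*Az h (2*m) - 3*Az (3*h) (2*m)) - 6*h*h*(9+18*m) - 6*(h*h')*(8*m*m-5))
      by (unfold C1e; ring).
    rewrite E1, E2, E3, E4, Hhw. subst Q1 Q2 Q3 Q4. subst G1 G4. subst h. subst a. subst m. unfold Az.
    exists ((-9) + (-81)*b + (-162)*b*b + (9)*y2 + (-9)*y1 + (9)*z4 + (-27)*z3 + (-27)*z2 + (-9)*z1 + (-9)*G3 + (-18)*G2 + (-9)*w + (18)*v + (-162)*v*b + (-288)*v*w + (-864)*v*v*w). ring.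
  - replace (3*h*C2e m h h' T1 T2 T3 T4) with
      (18*(12*(3*h)*T1) - 18*(12*h*T2) - 9*(12*h*T3) - 3*(12*(3*h)*T4)
       + 3*h*(3*Az (3*h) (2*m) + 6*Az h m + 3*Az h (2*m) - 18*Az (3*h) m - 72*m) + 12*h*h*(9+18*m) + 12*(h*h')*(1-4*m*m))
      by (unfold C2e; ring).
    rewrite E1, E2, E3, E4, Hhw. subst Q1 Q2 Q3 Q4. subst G1 G4. subst h. subst a. subst m. unfold Az.
    exists ((9) + (108)*b + (324)*b*b + (-9)*y2 + (27)*y1 + (-9)*z4 + (-27)*z3 + (-27)*z2 + (27)*z1 + (-18)*G3 + (-18)*w + (18)*v + (-162)*v*b + (-288)*v*w + (-864)*v*v*w). ring.
  - subst h'. subst h. subst a. subst m. unfold C1e, Az.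
    exists ((-10) + (-40)*b + (-2)*t + (-96)*v + (-288)*v*b + (-64)*v*t + (-144)*v*v + (-192)*v*v*t - 8*T1 - 8*T2 - 4*T3 + 4*T4). ring.
  - subst h'. subst h. subst a. subst m. unfold C2e, Az.
    exists ((8) + (80)*b + (-4)*t + (48)*v + (576)*v*b + (-64)*v*t + (-144)*v*v + (-192)*v*v*t - 4*T4 - 8*T2 - 4*T3 + 24*T1). ring.
Qed.

Lemma case_1_1 (m h h' a b v w t T1 T2 T3 T4 Q1 Q2 Q3 Q4 G1 G2 G3 G4 z1 z2 z3 z4 y1 y2 : Z) :
  m = 6*v+1 -> a = 2*b+1 -> h = 2*a+1 -> h*h' + 1 = w*(8*m) -> h' = t*3 ->
  12*(3*h)*T1 = ((3*h)*(3*h)-1)*(m-1)*(2*m-1) + 6*m*Q1 ->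
  12*h*T2 = (h*h-1)*(m-1)*(2*m-1) + 6*m*Q2 ->
  12*h*T3 = (h*h-1)*(2*m-1)*(2*(2*m)-1) + 6*(2*m)*Q3 ->
  12*(3*h)*T4 = ((3*h)*(3*h)-1)*(2*m-1)*(2*(2*m)-1) + 6*(2*m)*Q4 ->
  (Q1 = 2*G1 + 4*z1) -> (Q2 = 2*G2 + 4*z2) ->
  Q3 = 2*G3 + a*a + 4*z3 -> Q4 = 2*G4 + (3*a+1)*(3*a+1) + 4*z4 ->
  G1 = G2 + ((3*v) - (2*v)) + 2*y1 -> G4 = G3 + ((6*v+1-1) - (4*v)) + 2*y2 ->
  Z.divide (16*m) (3*h*C1e m h h' T1 T2 T3 T4) /\ Z.divide (16*m) (3*h*C2e m h h' T1 T2 T3 T4) /\ Z.divide 9 (C1e m h h' T1 T2 T3 T4) /\ Z.divide 9 (C2e m h h' T1 T2 T3 T4).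
Proof.
  intros Hm Ha Hh Hw Ht E1 E2 E3 E4 HQ1 HQ2 HQ3 HQ4 HG1 HG4.
  assert (Hhw : h*h' = w*(8*m) - 1) by lia.
  split; [|split; [|split]].
  - replace (3*h*C1e m h h' T1 T2 T3 T4) with
      (-6*(12*(3*h)*T1) - 18*(12*h*T2) - 9*(12*h*T3) + 3*(12*(3*h)*T4)
       + 3*h*(6*Az (3*h) m + 6*Az h m + 3*Az h (2*m) - 3*Az (3*h) (2*m)) - 6*h*h*(9+18*m) - 6*(h*h')*(8*m*m-5))
      by (unfold C1e; ring).
    rewrite E1, E2, E3, E4, Hhw. subst Q1 Q2 Q3 Q4. subst G1 G4. subst h. subst a. subst m. unfold Az.
    exists ((-90) + (-243)*b + (-162)*b*b + (9)*y2 + (-9)*y1 + (9)*z4 + (-27)*z3 + (-27)*z2 + (-9)*z1 + (-9)*G3 + (-18)*G2 + (-9)*w + (-63)*v + (-162)*v*b + (-288)*v*w + (-864)*v*v*w). ring.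
  - replace (3*h*C2e m h h' T1 T2 T3 T4) with
      (18*(12*(3*h)*T1) - 18*(12*h*T2) - 9*(12*h*T3) - 3*(12*(3*h)*T4)
       + 3*h*(3*Az (3*h) (2*m) + 6*Az h m + 3*Az h (2*m) - 18*Az (3*h) m - 72*m) + 12*h*h*(9+18*m) + 12*(h*h')*(1-4*m*m))
      by (unfold C2e; ring).
    rewrite E1, E2, E3, E4, Hhw. subst Q1 Q2 Q3 Q4. subst G1 G4. subst h. subst a. subst m. unfold Az.
    exists ((144) + (432)*b + (324)*b*b + (-9)*y2 + (27)*y1 + (-9)*z4 + (-27)*z3 + (-27)*z2 + (27)*z1 + (-18)*G3 + (-18)*w + (-63)*v + (-162)*v*b + (-288)*v*w + (-864)*v*v*w). ring.
  - subst h'. subst h. subst a. subst m. unfold C1e, Az.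
    exists ((-30) + (-40)*b + (-2)*t + (-240)*v + (-288)*v*b + (-64)*v*t + (-144)*v*v + (-192)*v*v*t - 8*T1 - 8*T2 - 4*T3 + 4*T4). ring.
  - subst h'. subst h. subst a. subst m. unfold C2e, Az.
    exists ((48) + (80)*b + (-4)*t + (336)*v + (576)*v*b + (-64)*v*t + (-144)*v*v + (-192)*v*v*t - 4*T4 - 8*T2 - 4*T3 + 24*T1). ring.
Qed.

Lemma case_2_0 (m h h' a b v w t T1 T2 T3 T4 Q1 Q2 Q3 Q4 G1 G2 G3 G4 z1 z2 z3 z4 y1 y2 : Z) :
  m = 6*v+2 -> a = 2*b+0 -> h = 2*a+1 -> h*h' + 1 = w*(8*m) -> h' = t*3 ->
  12*(3*h)*T1 = ((3*h)*(3*h)-1)*(m-1)*(2*m-1) + 6*m*Q1 ->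
  12*h*T2 = (h*h-1)*(m-1)*(2*m-1) + 6*m*Q2 ->
  12*h*T3 = (h*h-1)*(2*m-1)*(2*(2*m)-1) + 6*(2*m)*Q3 ->
  12*(3*h)*T4 = ((3*h)*(3*h)-1)*(2*m-1)*(2*(2*m)-1) + 6*(2*m)*Q4 ->
  (Q1 = 2*G1 + (3*a+1)*(3*a+1) + 4*z1) -> (Q2 = 2*G2 + a*a + 4*z2) ->
  Q3 = 2*G3 + a*a + 4*z3 -> Q4 = 2*G4 + (3*a+1)*(3*a+1) + 4*z4 ->
  G1 = G2 + ((3*v) - (2*v)) + 2*y1 -> G4 = G3 + ((6*v+2-1) - (4*v+1)) + 2*y2 ->
  Z.divide (16*m) (3*h*C1e m h h' T1 T2 T3 T4) /\ Z.divide (16*m) (3*h*C2e m h h' T1 T2 T3 T4) /\ Z.divide 9 (C1e m h h' T1 T2 T3 T4) /\ Z.divide 9 (C2e m h h' T1 T2 T3 T4).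
Proof.
  intros Hm Ha Hh Hw Ht E1 E2 E3 E4 HQ1 HQ2 HQ3 HQ4 HG1 HG4.
  assert (Hhw : h*h' = w*(8*m) - 1) by lia.
  split; [|split; [|split]].
  - replace (3*h*C1e m h h' T1 T2 T3 T4) with
      (-6*(12*(3*h)*T1) - 18*(12*h*T2) - 9*(12*h*T3) + 3*(12*(3*h)*T4)
       + 3*h*(6*Az (3*h) m + 6*Az h m + 3*Az h (2*m) - 3*Az (3*h) (2*m)) - 6*h*h*(9+18*m) - 6*(h*h')*(8*m*m-5))
      by (unfold C1e; ring).
    rewrite E1, E2, E3, E4, Hhw. subst Q1 Q2 Q3 Q4. subst G1 G4. subst h. subst a. subst m. unfold Az.
    exists ((-9) + (-135)*b + (-270)*b*b + (9)*y2 + (-9)*y1 + (9)*z4 + (-27)*z3 + (-27)*z2 + (-9)*z1 + (-9)*G3 + (-18)*G2 + (-81)*w + (18)*v + (-162)*v*b + (-576)*v*w + (-864)*v*v*w). ring.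
  - replace (3*h*C2e m h h' T1 T2 T3 T4) with
      (18*(12*(3*h)*T1) - 18*(12*h*T2) - 9*(12*h*T3) - 3*(12*(3*h)*T4)
       + 3*h*(3*Az (3*h) (2*m) + 6*Az h m + 3*Az h (2*m) - 18*Az (3*h) m - 72*m) + 12*h*h*(9+18*m) + 12*(h*h')*(1-4*m*m))
      by (unfold C2e; ring).
    rewrite E1, E2, E3, E4, Hhw. subst Q1 Q2 Q3 Q4. subst G1 G4. subst h. subst a. subst m. unfold Az.
    exists ((18) + (162)*b + (540)*b*b + (-9)*y2 + (27)*y1 + (-9)*z4 + (-27)*z3 + (-27)*z2 + (27)*z1 + (-18)*G3 + (-90)*w + (18)*v + (-162)*v*b + (-576)*v*w + (-864)*v*v*w). ring.
  - subst h'. subst h. subst a. subst m. unfold C1e, Az.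
    exists ((-30) + (-88)*b + (-18)*t + (-144)*v + (-288)*v*b + (-128)*v*t + (-144)*v*v + (-192)*v*v*t - 8*T1 - 8*T2 - 4*T3 + 4*T4). ring.
  - subst h'. subst h. subst a. subst m. unfold C2e, Az.
    exists ((12) + (176)*b + (-20)*t + (576)*v*b + (-128)*v*t + (-144)*v*v + (-192)*v*v*t - 4*T4 - 8*T2 - 4*T3 + 24*T1). ring.
Qed.

Lemma case_2_1 (m h h' a b v w t T1 T2 T3 T4 Q1 Q2 Q3 Q4 G1 G2 G3 G4 z1 z2 z3 z4 y1 y2 : Z) :
  m = 6*v+2 -> a = 2*b+1 -> h = 2*a+1 -> h*h' + 1 = w*(8*m) -> h' = t*3 ->
  12*(3*h)*T1 = ((3*h)*(3*h)-1)*(m-1)*(2*m-1) + 6*m*Q1 ->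
  12*h*T2 = (h*h-1)*(m-1)*(2*m-1) + 6*m*Q2 ->
  12*h*T3 = (h*h-1)*(2*m-1)*(2*(2*m)-1) + 6*(2*m)*Q3 ->
  12*(3*h)*T4 = ((3*h)*(3*h)-1)*(2*m-1)*(2*(2*m)-1) + 6*(2*m)*Q4 ->
  (Q1 = 2*G1 + (3*a+1)*(3*a+1) + 4*z1) -> (Q2 = 2*G2 + a*a + 4*z2) ->
  Q3 = 2*G3 + a*a + 4*z3 -> Q4 = 2*G4 + (3*a+1)*(3*a+1) + 4*z4 ->
  G1 = G2 + ((3*v) - (2*v)) + 2*y1 -> G4 = G3 + ((6*v+2-1) - (4*v+1)) + 2*y2 ->
  Z.divide (16*m) (3*h*C1e m h h' T1 T2 T3 T4) /\ Z.divide (16*m) (3*h*C2e m h h' T1 T2 T3 T4) /\ Z.divide 9 (C1e m h h' T1 T2 T3 T4) /\ Z.divide 9 (C2e m h h' T1 T2 T3 T4).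
Proof.
  intros Hm Ha Hh Hw Ht E1 E2 E3 E4 HQ1 HQ2 HQ3 HQ4 HG1 HG4.
  assert (Hhw : h*h' = w*(8*m) - 1) by lia.
  split; [|split; [|split]].
  - replace (3*h*C1e m h h' T1 T2 T3 T4) with
      (-6*(12*(3*h)*T1) - 18*(12*h*T2) - 9*(12*h*T3) + 3*(12*(3*h)*T4)
       + 3*h*(6*Az (3*h) m + 6*Az h m + 3*Az h (2*m) - 3*Az (3*h) (2*m)) - 6*h*h*(9+18*m) - 6*(h*h')*(8*m*m-5))
      by (unfold C1e; ring).
    rewrite E1, E2, E3, E4, Hhw. subst Q1 Q2 Q3 Q4. subst G1 G4. subst h. subst a. subst m. unfold Az.
    exists ((-144) + (-405)*b + (-270)*b*b + (9)*y2 + (-9)*y1 + (9)*z4 + (-27)*z3 + (-27)*z2 + (-9)*z1 + (-9)*G3 + (-18)*G2 + (-81)*w + (-63)*v + (-162)*v*b + (-576)*v*w + (-864)*v*v*w). ring.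
  - replace (3*h*C2e m h h' T1 T2 T3 T4) with
      (18*(12*(3*h)*T1) - 18*(12*h*T2) - 9*(12*h*T3) - 3*(12*(3*h)*T4)
       + 3*h*(3*Az (3*h) (2*m) + 6*Az h m + 3*Az h (2*m) - 18*Az (3*h) m - 72*m) + 12*h*h*(9+18*m) + 12*(h*h')*(1-4*m*m))
      by (unfold C2e; ring).
    rewrite E1, E2, E3, E4, Hhw. subst Q1 Q2 Q3 Q4. subst G1 G4. subst h. subst a. subst m. unfold Az.
    exists ((234) + (702)*b + (540)*b*b + (-9)*y2 + (27)*y1 + (-9)*z4 + (-27)*z3 + (-27)*z2 + (27)*z1 + (-18)*G3 + (-90)*w + (-63)*v + (-162)*v*b + (-576)*v*w + (-864)*v*v*w). ring.
  - subst h'. subst h. subst a. subst m. unfold C1e, Az.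
    exists ((-74) + (-88)*b + (-18)*t + (-288)*v + (-288)*v*b + (-128)*v*t + (-144)*v*v + (-192)*v*v*t - 8*T1 - 8*T2 - 4*T3 + 4*T4). ring.
  - subst h'. subst h. subst a. subst m. unfold C2e, Az.
    exists ((100) + (176)*b + (-20)*t + (288)*v + (576)*v*b + (-128)*v*t + (-144)*v*v + (-192)*v*v*t - 4*T4 - 8*T2 - 4*T3 + 24*T1). ring.
Qed.

Lemma case_4_0 (m h h' a b v w t T1 T2 T3 T4 Q1 Q2 Q3 Q4 G1 G2 G3 G4 z1 z2 z3 z4 y1 y2 : Z) :
  m = 6*v+4 -> a = 2*b+0 -> h = 2*a+1 -> h*h' + 1 = w*(8*m) -> h' = t*3 ->
  12*(3*h)*T1 = ((3*h)*(3*h)-1)*(m-1)*(2*m-1) + 6*m*Q1 ->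
  12*h*T2 = (h*h-1)*(m-1)*(2*m-1) + 6*m*Q2 ->
  12*h*T3 = (h*h-1)*(2*m-1)*(2*(2*m)-1) + 6*(2*m)*Q3 ->
  12*(3*h)*T4 = ((3*h)*(3*h)-1)*(2*m-1)*(2*(2*m)-1) + 6*(2*m)*Q4 ->
  (Q1 = 2*G1 + (3*a+1)*(3*a+1) + 4*z1) -> (Q2 = 2*G2 + a*a + 4*z2) ->
  Q3 = 2*G3 + a*a + 4*z3 -> Q4 = 2*G4 + (3*a+1)*(3*a+1) + 4*z4 ->
  G1 = G2 + ((3*v+1) - (2*v+1)) + 2*y1 -> G4 = G3 + ((6*v+4-1) - (4*v+2)) + 2*y2 ->
  Z.divide (16*m) (3*h*C1e m h h' T1 T2 T3 T4) /\ Z.divide (16*m) (3*h*C2e m h h' T1 T2 T3 T4) /\ Z.divide 9 (C1e m h h' T1 T2 T3 T4) /\ Z.divide 9 (C2e m h h' T1 T2 T3 T4).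
Proof.
  intros Hm Ha Hh Hw Ht E1 E2 E3 E4 HQ1 HQ2 HQ3 HQ4 HG1 HG4.
  assert (Hhw : h*h' = w*(8*m) - 1) by lia.
  split; [|split; [|split]].
  - replace (3*h*C1e m h h' T1 T2 T3 T4) with
      (-6*(12*(3*h)*T1) - 18*(12*h*T2) - 9*(12*h*T3) + 3*(12*(3*h)*T4)
       + 3*h*(6*Az (3*h) m + 6*Az h m + 3*Az h (2*m) - 3*Az (3*h) (2*m)) - 6*h*h*(9+18*m) - 6*(h*h')*(8*m*m-5))
      by (unfold C1e; ring).
    rewrite E1, E2, E3, E4, Hhw. subst Q1 Q2 Q3 Q4. subst G1 G4. subst h. subst a. subst m. unfold Az.
    exists ((-189)*b + (-270)*b*b + (9)*y2 + (-9)*y1 + (9)*z4 + (-27)*z3 + (-27)*z2 + (-9)*z1 + (-9)*G3 + (-18)*G2 + (-369)*w + (18)*v + (-162)*v*b + (-1152)*v*w + (-864)*v*v*w). ring.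
  - replace (3*h*C2e m h h' T1 T2 T3 T4) with
      (18*(12*(3*h)*T1) - 18*(12*h*T2) - 9*(12*h*T3) - 3*(12*(3*h)*T4)
       + 3*h*(3*Az (3*h) (2*m) + 6*Az h m + 3*Az h (2*m) - 18*Az (3*h) m - 72*m) + 12*h*h*(9+18*m) + 12*(h*h')*(1-4*m*m))
      by (unfold C2e; ring).
    rewrite E1, E2, E3, E4, Hhw. subst Q1 Q2 Q3 Q4. subst G1 G4. subst h. subst a. subst m. unfold Az.
    exists ((18) + (108)*b + (540)*b*b + (-9)*y2 + (27)*y1 + (-9)*z4 + (-27)*z3 + (-27)*z2 + (27)*z1 + (-18)*G3 + (-378)*w + (18)*v + (-162)*v*b + (-1152)*v*w + (-864)*v*v*w). ring.
  - subst h'. subst h. subst a. subst m. unfold C1e, Az.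
    exists ((-94) + (-184)*b + (-82)*t + (-240)*v + (-288)*v*b + (-256)*v*t + (-144)*v*v + (-192)*v*v*t - 8*T1 - 8*T2 - 4*T3 + 4*T4). ring.
  - subst h'. subst h. subst a. subst m. unfold C2e, Az.
    exists ((-4) + (368)*b + (-84)*t + (-96)*v + (576)*v*b + (-256)*v*t + (-144)*v*v + (-192)*v*v*t - 4*T4 - 8*T2 - 4*T3 + 24*T1). ring.
Qed.

Lemma case_4_1 (m h h' a b v w t T1 T2 T3 T4 Q1 Q2 Q3 Q4 G1 G2 G3 G4 z1 z2 z3 z4 y1 y2 : Z) :
  m = 6*v+4 -> a = 2*b+1 -> h = 2*a+1 -> h*h' + 1 = w*(8*m) -> h' = t*3 ->
  12*(3*h)*T1 = ((3*h)*(3*h)-1)*(m-1)*(2*m-1) + 6*m*Q1 ->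
  12*h*T2 = (h*h-1)*(m-1)*(2*m-1) + 6*m*Q2 ->
  12*h*T3 = (h*h-1)*(2*m-1)*(2*(2*m)-1) + 6*(2*m)*Q3 ->
  12*(3*h)*T4 = ((3*h)*(3*h)-1)*(2*m-1)*(2*(2*m)-1) + 6*(2*m)*Q4 ->
  (Q1 = 2*G1 + (3*a+1)*(3*a+1) + 4*z1) -> (Q2 = 2*G2 + a*a + 4*z2) ->
  Q3 = 2*G3 + a*a + 4*z3 -> Q4 = 2*G4 + (3*a+1)*(3*a+1) + 4*z4 ->
  G1 = G2 + ((3*v+1) - (2*v+1)) + 2*y1 -> G4 = G3 + ((6*v+4-1) - (4*v+2)) + 2*y2 ->
  Z.divide (16*m) (3*h*C1e m h h' T1 T2 T3 T4) /\ Z.divide (16*m) (3*h*C2e m h h' T1 T2 T3 T4) /\ Z.divide 9 (C1e m h h' T1 T2 T3 T4) /\ Z.divide 9 (C2e m h h' T1 T2 T3 T4).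
Proof.
  intros Hm Ha Hh Hw Ht E1 E2 E3 E4 HQ1 HQ2 HQ3 HQ4 HG1 HG4.
  assert (Hhw : h*h' = w*(8*m) - 1) by lia.
  split; [|split; [|split]].
  - replace (3*h*C1e m h h' T1 T2 T3 T4) with
      (-6*(12*(3*h)*T1) - 18*(12*h*T2) - 9*(12*h*T3) + 3*(12*(3*h)*T4)
       + 3*h*(6*Az (3*h) m + 6*Az h m + 3*Az h (2*m) - 3*Az (3*h) (2*m)) - 6*h*h*(9+18*m) - 6*(h*h')*(8*m*m-5))
      by (unfold C1e; ring).
    rewrite E1, E2, E3, E4, Hhw. subst Q1 Q2 Q3 Q4. subst G1 G4. subst h. subst a. subst m. unfold Az.
    exists ((-162) + (-459)*b + (-270)*b*b + (9)*y2 + (-9)*y1 + (9)*z4 + (-27)*z3 + (-27)*z2 + (-9)*z1 + (-9)*G3 + (-18)*G2 + (-369)*w + (-63)*v + (-162)*v*b + (-1152)*v*w + (-864)*v*v*w). ring.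
  - replace (3*h*C2e m h h' T1 T2 T3 T4) with
      (18*(12*(3*h)*T1) - 18*(12*h*T2) - 9*(12*h*T3) - 3*(12*(3*h)*T4)
       + 3*h*(3*Az (3*h) (2*m) + 6*Az h m + 3*Az h (2*m) - 18*Az (3*h) m - 72*m) + 12*h*h*(9+18*m) + 12*(h*h')*(1-4*m*m))
      by (unfold C2e; ring).
    rewrite E1, E2, E3, E4, Hhw. subst Q1 Q2 Q3 Q4. subst G1 G4. subst h. subst a. subst m. unfold Az.
    exists ((207) + (648)*b + (540)*b*b + (-9)*y2 + (27)*y1 + (-9)*z4 + (-27)*z3 + (-27)*z2 + (27)*z1 + (-18)*G3 + (-378)*w + (-63)*v + (-162)*v*b + (-1152)*v*w + (-864)*v*v*w). ring.
  - subst h'. subst h. subst a. subst m. unfold C1e, Az.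
    exists ((-186) + (-184)*b + (-82)*t + (-384)*v + (-288)*v*b + (-256)*v*t + (-144)*v*v + (-192)*v*v*t - 8*T1 - 8*T2 - 4*T3 + 4*T4). ring.
  - subst h'. subst h. subst a. subst m. unfold C2e, Az.
    exists ((180) + (368)*b + (-84)*t + (192)*v + (576)*v*b + (-256)*v*t + (-144)*v*v + (-192)*v*v*t - 4*T4 - 8*T2 - 4*T3 + 24*T1). ring.
Qed.

Lemma case_5_0 (m h h' a b v w t T1 T2 T3 T4 Q1 Q2 Q3 Q4 G1 G2 G3 G4 z1 z2 z3 z4 y1 y2 : Z) :
  m = 6*v+5 -> a = 2*b+0 -> h = 2*a+1 -> h*h' + 1 = w*(8*m) -> h' = t*3 ->
  12*(3*h)*T1 = ((3*h)*(3*h)-1)*(m-1)*(2*m-1) + 6*m*Q1 ->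
  12*h*T2 = (h*h-1)*(m-1)*(2*m-1) + 6*m*Q2 ->
  12*h*T3 = (h*h-1)*(2*m-1)*(2*(2*m)-1) + 6*(2*m)*Q3 ->
  12*(3*h)*T4 = ((3*h)*(3*h)-1)*(2*m-1)*(2*(2*m)-1) + 6*(2*m)*Q4 ->
  (Q1 = 2*G1 + 4*z1) -> (Q2 = 2*G2 + 4*z2) ->
  Q3 = 2*G3 + a*a + 4*z3 -> Q4 = 2*G4 + (3*a+1)*(3*a+1) + 4*z4 ->
  G1 = G2 + ((3*v+2) - (2*v+1)) + 2*y1 -> G4 = G3 + ((6*v+5-1) - (4*v+3)) + 2*y2 ->
  Z.divide (16*m) (3*h*C1e m h h' T1 T2 T3 T4) /\ Z.divide (16*m) (3*h*C2e m h h' T1 T2 T3 T4) /\ Z.divide 9 (C1e m h h' T1 T2 T3 T4) /\ Z.divide 9 (C2e m h h' T1 T2 T3 T4).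
Proof.
  intros Hm Ha Hh Hw Ht E1 E2 E3 E4 HQ1 HQ2 HQ3 HQ4 HG1 HG4.
  assert (Hhw : h*h' = w*(8*m) - 1) by lia.
  split; [|split; [|split]].
  - replace (3*h*C1e m h h' T1 T2 T3 T4) with
      (-6*(12*(3*h)*T1) - 18*(12*h*T2) - 9*(12*h*T3) + 3*(12*(3*h)*T4)
       + 3*h*(6*Az (3*h) m + 6*Az h m + 3*Az h (2*m) - 3*Az (3*h) (2*m)) - 6*h*h*(9+18*m) - 6*(h*h')*(8*m*m-5))
      by (unfold C1e; ring).
    rewrite E1, E2, E3, E4, Hhw. subst Q1 Q2 Q3 Q4. subst G1 G4. subst h. subst a. subst m. unfold Az.
    exists ((-189)*b + (-162)*b*b + (9)*y2 + (-9)*y1 + (9)*z4 + (-27)*z3 + (-27)*z2 + (-9)*z1 + (-9)*G3 + (-18)*G2 + (-585)*w + (18)*v + (-162)*v*b + (-1440)*v*w + (-864)*v*v*w). ring.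
  - replace (3*h*C2e m h h' T1 T2 T3 T4) with
      (18*(12*(3*h)*T1) - 18*(12*h*T2) - 9*(12*h*T3) - 3*(12*(3*h)*T4)
       + 3*h*(3*Az (3*h) (2*m) + 6*Az h m + 3*Az h (2*m) - 18*Az (3*h) m - 72*m) + 12*h*h*(9+18*m) + 12*(h*h')*(1-4*m*m))
      by (unfold C2e; ring).
    rewrite E1, E2, E3, E4, Hhw. subst Q1 Q2 Q3 Q4. subst G1 G4. subst h. subst a. subst m. unfold Az.
    exists ((27) + (324)*b*b + (-9)*y2 + (27)*y1 + (-9)*z4 + (-27)*z3 + (-27)*z2 + (27)*z1 + (-18)*G3 + (-594)*w + (18)*v + (-162)*v*b + (-1440)*v*w + (-864)*v*v*w). ring.
  - subst h'. subst h. subst a. subst m. unfold C1e, Az.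
    exists ((-138) + (-232)*b + (-130)*t + (-288)*v + (-288)*v*b + (-320)*v*t + (-144)*v*v + (-192)*v*v*t - 8*T1 - 8*T2 - 4*T3 + 4*T4). ring.
  - subst h'. subst h. subst a. subst m. unfold C2e, Az.
    exists ((-24) + (464)*b + (-132)*t + (-144)*v + (576)*v*b + (-320)*v*t + (-144)*v*v + (-192)*v*v*t - 4*T4 - 8*T2 - 4*T3 + 24*T1). ring.
Qed.

Lemma case_5_1 (m h h' a b v w t T1 T2 T3 T4 Q1 Q2 Q3 Q4 G1 G2 G3 G4 z1 z2 z3 z4 y1 y2 : Z) :
  m = 6*v+5 -> a = 2*b+1 -> h = 2*a+1 -> h*h' + 1 = w*(8*m) -> h' = t*3 ->
  12*(3*h)*T1 = ((3*h)*(3*h)-1)*(m-1)*(2*m-1) + 6*m*Q1 ->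
  12*h*T2 = (h*h-1)*(m-1)*(2*m-1) + 6*m*Q2 ->
  12*h*T3 = (h*h-1)*(2*m-1)*(2*(2*m)-1) + 6*(2*m)*Q3 ->
  12*(3*h)*T4 = ((3*h)*(3*h)-1)*(2*m-1)*(2*(2*m)-1) + 6*(2*m)*Q4 ->
  (Q1 = 2*G1 + 4*z1) -> (Q2 = 2*G2 + 4*z2) ->
  Q3 = 2*G3 + a*a + 4*z3 -> Q4 = 2*G4 + (3*a+1)*(3*a+1) + 4*z4 ->
  G1 = G2 + ((3*v+2) - (2*v+1)) + 2*y1 -> G4 = G3 + ((6*v+5-1) - (4*v+3)) + 2*y2 ->
  Z.divide (16*m) (3*h*C1e m h h' T1 T2 T3 T4) /\ Z.divide (16*m) (3*h*C2e m h h' T1 T2 T3 T4) /\ Z.divide 9 (C1e m h h' T1 T2 T3 T4) /\ Z.divide 9 (C2e m h h' T1 T2 T3 T4).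
Proof.
  intros Hm Ha Hh Hw Ht E1 E2 E3 E4 HQ1 HQ2 HQ3 HQ4 HG1 HG4.
  assert (Hhw : h*h' = w*(8*m) - 1) by lia.
  split; [|split; [|split]].
  - replace (3*h*C1e m h h' T1 T2 T3 T4) with
      (-6*(12*(3*h)*T1) - 18*(12*h*T2) - 9*(12*h*T3) + 3*(12*(3*h)*T4)
       + 3*h*(6*Az (3*h) m + 6*Az h m + 3*Az h (2*m) - 3*Az (3*h) (2*m)) - 6*h*h*(9+18*m) - 6*(h*h')*(8*m*m-5))
      by (unfold C1e; ring).
    rewrite E1, E2, E3, E4, Hhw. subst Q1 Q2 Q3 Q4. subst G1 G4. subst h. subst a. subst m. unfold Az.
    exists ((-135) + (-351)*b + (-162)*b*b + (9)*y2 + (-9)*y1 + (9)*z4 + (-27)*z3 + (-27)*z2 + (-9)*z1 + (-9)*G3 + (-18)*G2 + (-585)*w + (-63)*v + (-162)*v*b + (-1440)*v*w + (-864)*v*v*w). ring.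
  - replace (3*h*C2e m h h' T1 T2 T3 T4) with
      (18*(12*(3*h)*T1) - 18*(12*h*T2) - 9*(12*h*T3) - 3*(12*(3*h)*T4)
       + 3*h*(3*Az (3*h) (2*m) + 6*Az h m + 3*Az h (2*m) - 18*Az (3*h) m - 72*m) + 12*h*h*(9+18*m) + 12*(h*h')*(1-4*m*m))
      by (unfold C2e; ring).
    rewrite E1, E2, E3, E4, Hhw. subst Q1 Q2 Q3 Q4. subst G1 G4. subst h. subst a. subst m. unfold Az.
    exists ((108) + (324)*b + (324)*b*b + (-9)*y2 + (27)*y1 + (-9)*z4 + (-27)*z3 + (-27)*z2 + (27)*z1 + (-18)*G3 + (-594)*w + (-63)*v + (-162)*v*b + (-1440)*v*w + (-864)*v*v*w). ring.
  - subst h'. subst h. subst a. subst m. unfold C1e, Az.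
    exists ((-254) + (-232)*b + (-130)*t + (-432)*v + (-288)*v*b + (-320)*v*t + (-144)*v*v + (-192)*v*v*t - 8*T1 - 8*T2 - 4*T3 + 4*T4). ring.
  - subst h'. subst h. subst a. subst m. unfold C2e, Az.
    exists ((208) + (464)*b + (-132)*t + (144)*v + (576)*v*b + (-320)*v*t + (-144)*v*v + (-192)*v*v*t - 4*T4 - 8*T2 - 4*T3 + 24*T1). ring.
Qed.

Lemma not3 m : rel_prime 3 m -> ~ (3 | m).
Proof.
  intros H D. destruct H as [_ _ H]. assert (X : (3 | 1)) by (apply H; [apply Z.divide_refl|exact D]).
  destruct X as [x Hx]. lia.
Qed.

Lemma combine m h a X : 0 < m -> rel_prime 3 m -> rel_prime h m -> h = 2*a+1 ->
  Z.divide (16*m) (3*h*X) -> Z.divide 9 X -> Z.divide (144*m) X.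
Proof.
  intros Hm H3 Hh Ha D16 D9.
  assert (R2 : rel_prime (3*h) 2) by (apply bezout_rel_prime; apply (Bezout_intro _ _ _ 1 (-(3*a+1))); lia).
  assert (R16 : rel_prime (3*h) 16).
  { replace 16 with (2*(2*(2*2))) by lia. repeat apply rel_prime_mult; auto. }
  assert (Rm : rel_prime (3*h) m).
  { apply rel_prime_sym, rel_prime_mult; apply rel_prime_sym; auto. }
  assert (R : rel_prime (16*m) (3*h)) by (apply rel_prime_sym, rel_prime_mult; auto).
  apply Gauss in D16; auto. destruct D16 as [y Hy].
  assert (R9 : rel_prime 9 (16*m)).
  { apply rel_prime_mult.
    - apply bezout_rel_prime. apply (Bezout_intro _ _ _ (-7) 4). lia.
    - replace 9 with (3*3) by lia. apply rel_prime_sym, rel_prime_mult; apply rel_prime_sym; auto. }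
  assert (D : (9 | (16*m) * y)) by (rewrite Z.mul_comm, <- Hy; auto).
  apply Gauss in D; auto. destruct D as [u Hu]. exists u. lia.
Qed.

Lemma core m h h' a T1 T2 T3 T4 Q1 Q2 Q3 Q4 G1 G2 G3 G4 :
  0 < m -> rel_prime 3 m -> rel_prime h m -> h = 2*a+1 -> (8*m | h*h'+1) -> (3 | h') ->
  12*(3*h)*T1 = ((3*h)*(3*h)-1)*(m-1)*(2*m-1) + 6*m*Q1 ->
  12*h*T2 = (h*h-1)*(m-1)*(2*m-1) + 6*m*Q2 ->
  12*h*T3 = (h*h-1)*(2*m-1)*(2*(2*m)-1) + 6*(2*m)*Q3 ->
  12*(3*h)*T4 = ((3*h)*(3*h)-1)*(2*m-1)*(2*(2*m)-1) + 6*(2*m)*Q4 ->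
  (m mod 2 = 1 -> (4 | Q1 - 2*G1) /\ (4 | Q2 - 2*G2)) ->
  (m mod 2 = 0 -> (4 | Q1 - 2*G1 - (3*a+1)*(3*a+1)) /\ (4 | Q2 - 2*G2 - a*a)) ->
  (4 | Q3 - 2*G3 - a*a) -> (4 | Q4 - 2*G4 - (3*a+1)*(3*a+1)) ->
  (2 | G1 - G2 - ((m-1)/2 - m/3)) -> (2 | G4 - G3 - ((2*m-1)/2 - (2*m)/3)) ->
  Z.divide (144*m) (C1e m h h' T1 T2 T3 T4) /\ Z.divide (144*m) (C2e m h h' T1 T2 T3 T4).
Proof.
  intros Hm H3 Hhm Ha [w Hw] [t Ht] E1 E2 E3 E4 HQo HQe [z3 Hz3] [z4 Hz4] [y1 Hy1] [y2 Hy2].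
  assert (N3 := not3 m H3).
  set (v := m / 6).
  assert (Hv : m = 6*v+1 \/ m = 6*v+2 \/ m = 6*v+4 \/ m = 6*v+5).
  { pose proof (Z.div_mod m 6 ltac:(lia)). pose proof (Z.mod_pos_bound m 6 ltac:(lia)).
    assert (m mod 6 <> 0 /\ m mod 6 <> 3).
    { split; intros E; apply N3; exists (2*v + (if Z.eq_dec (m mod 6) 0 then 0 else 1)); 
      destruct (Z.eq_dec (m mod 6) 0); unfold v in *; lia. }
    unfold v. lia. }
  assert (Hab : exists b, a = 2*b+0 \/ a = 2*b+1).
  { destruct (Z.Even_or_Odd a) as [[b Hb]|[b Hb]]; exists b; lia. }
  destruct Hab as [b Hab].
  assert (Q3e : Q3 = 2*G3 + a*a + 4*z3) by lia.
  assert (Q4e : Q4 = 2*G4 + (3*a+1)*(3*a+1) + 4*z4) by lia.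
  destruct Hv as [Hv|[Hv|[Hv|Hv]]].
  -
    rewrite Hv in Hy1, Hy2, HQo.
    rewrite (div_eq (6*v+1-1) 2 (3*v) 0), (div_eq (6*v+1) 3 (2*v) 1) in Hy1 by lia.
    rewrite (div_eq (2*(6*v+1)-1) 2 (6*v+1-1) 1), (div_eq (2*(6*v+1)) 3 (4*v) 2) in Hy2 by lia.
    destruct HQo as [[z1 Hz1] [z2 Hz2]]; [apply (mod_eq _ _ (3*v) 1); lia|].
    assert (G1e : G1 = G2 + ((3*v) - (2*v)) + 2*y1) by lia.
    assert (G4e : G4 = G3 + ((6*v+1-1) - (4*v)) + 2*y2) by lia.
    assert (Q1e : Q1 = 2*G1 + 4*z1) by lia. assert (Q2e : Q2 = 2*G2 + 4*z2) by lia.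
    destruct Hab as [Hab|Hab].
    + destruct (case_1_0 m h h' a b v w t T1 T2 T3 T4 Q1 Q2 Q3 Q4 G1 G2 G3 G4 z1 z2 z3 z4 y1 y2)
        as [D1 [D2 [D3 D4]]]; auto.
      split; eapply combine; eauto.
    + destruct (case_1_1 m h h' a b v w t T1 T2 T3 T4 Q1 Q2 Q3 Q4 G1 G2 G3 G4 z1 z2 z3 z4 y1 y2)
        as [D1 [D2 [D3 D4]]]; auto.
      split; eapply combine; eauto.
  -
    rewrite Hv in Hy1, Hy2, HQe.
    rewrite (div_eq (6*v+2-1) 2 (3*v) 1), (div_eq (6*v+2) 3 (2*v) 2) in Hy1 by lia.
    rewrite (div_eq (2*(6*v+2)-1) 2 (6*v+2-1) 1), (div_eq (2*(6*v+2)) 3 (4*v+1) 1) in Hy2 by lia.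
    destruct HQe as [[z1 Hz1] [z2 Hz2]]; [apply (mod_eq _ _ (3*v+1) 0); lia|].
    assert (G1e : G1 = G2 + ((3*v) - (2*v)) + 2*y1) by lia.
    assert (G4e : G4 = G3 + ((6*v+2-1) - (4*v+1)) + 2*y2) by lia.
    assert (Q1e : Q1 = 2*G1 + (3*a+1)*(3*a+1) + 4*z1) by lia. assert (Q2e : Q2 = 2*G2 + a*a + 4*z2) by lia.
    destruct Hab as [Hab|Hab].
    + destruct (case_2_0 m h h' a b v w t T1 T2 T3 T4 Q1 Q2 Q3 Q4 G1 G2 G3 G4 z1 z2 z3 z4 y1 y2)
        as [D1 [D2 [D3 D4]]]; auto.
      split; eapply combine; eauto.
    + destruct (case_2_1 m h h' a b v w t T1 T2 T3 T4 Q1 Q2 Q3 Q4 G1 G2 G3 G4 z1 z2 z3 z4 y1 y2)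
        as [D1 [D2 [D3 D4]]]; auto.
      split; eapply combine; eauto.
  -
    rewrite Hv in Hy1, Hy2, HQe.
    rewrite (div_eq (6*v+4-1) 2 (3*v+1) 1), (div_eq (6*v+4) 3 (2*v+1) 1) in Hy1 by lia.
    rewrite (div_eq (2*(6*v+4)-1) 2 (6*v+4-1) 1), (div_eq (2*(6*v+4)) 3 (4*v+2) 2) in Hy2 by lia.
    destruct HQe as [[z1 Hz1] [z2 Hz2]]; [apply (mod_eq _ _ (3*v+2) 0); lia|].
    assert (G1e : G1 = G2 + ((3*v+1) - (2*v+1)) + 2*y1) by lia.
    assert (G4e : G4 = G3 + ((6*v+4-1) - (4*v+2)) + 2*y2) by lia.
    assert (Q1e : Q1 = 2*G1 + (3*a+1)*(3*a+1) + 4*z1) by lia. assert (Q2e : Q2 = 2*G2 + a*a + 4*z2) by lia.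
    destruct Hab as [Hab|Hab].
    + destruct (case_4_0 m h h' a b v w t T1 T2 T3 T4 Q1 Q2 Q3 Q4 G1 G2 G3 G4 z1 z2 z3 z4 y1 y2)
        as [D1 [D2 [D3 D4]]]; auto.
      split; eapply combine; eauto.
    + destruct (case_4_1 m h h' a b v w t T1 T2 T3 T4 Q1 Q2 Q3 Q4 G1 G2 G3 G4 z1 z2 z3 z4 y1 y2)
        as [D1 [D2 [D3 D4]]]; auto.
      split; eapply combine; eauto.
  -
    rewrite Hv in Hy1, Hy2, HQo.
    rewrite (div_eq (6*v+5-1) 2 (3*v+2) 0), (div_eq (6*v+5) 3 (2*v+1) 2) in Hy1 by lia.
    rewrite (div_eq (2*(6*v+5)-1) 2 (6*v+5-1) 1), (div_eq (2*(6*v+5)) 3 (4*v+3) 1) in Hy2 by lia.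
    destruct HQo as [[z1 Hz1] [z2 Hz2]]; [apply (mod_eq _ _ (3*v+2) 1); lia|].
    assert (G1e : G1 = G2 + ((3*v+2) - (2*v+1)) + 2*y1) by lia.
    assert (G4e : G4 = G3 + ((6*v+5-1) - (4*v+3)) + 2*y2) by lia.
    assert (Q1e : Q1 = 2*G1 + 4*z1) by lia. assert (Q2e : Q2 = 2*G2 + 4*z2) by lia.
    destruct Hab as [Hab|Hab].
    + destruct (case_5_0 m h h' a b v w t T1 T2 T3 T4 Q1 Q2 Q3 Q4 G1 G2 G3 G4 z1 z2 z3 z4 y1 y2)
        as [D1 [D2 [D3 D4]]]; auto.
      split; eapply combine; eauto.
    + destruct (case_5_1 m h h' a b v w t T1 T2 T3 T4 Q1 Q2 Q3 Q4 G1 G2 G3 G4 z1 z2 z3 z4 y1 y2)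
        as [D1 [D2 [D3 D4]]]; auto.
      split; eapply combine; eauto.
Qed.

End ZPart.
Import ZPart.


Lemma fold_Rplus_app l1 l2 : fold_right Rplus 0 (l1 ++ l2) = fold_right Rplus 0 l1 + fold_right Rplus 0 l2.
Proof. induction l1; simpl; [lra|]. rewrite IHl1; lra. Qed.

Lemma ds_gen h K n : IZR K <> 0 ->
  fold_right Rplus 0
    (map (fun n : nat =>
            let r := Z.of_nat n in
            (IZR r / IZR K) *
            (IZR h * IZR r / IZR K - IZR (Z.div (h * r) K) - 1 / 2))
         (seq 1 n))
  = IZR h * IZR (sZ (fun r => (r*r)%Z) n) / (IZR K * IZR K)
    - IZR (sZ (fun r => (r * (h*r/K))%Z) n) / IZR K - IZR (sZ (fun r => r) n) / (2 * IZR K).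
Proof.
  intros HK. induction n.
  - simpl. rewrite !sZ_0. field. auto.
  - rewrite seq_S, map_app, fold_Rplus_app, IHn, !sZ_S. cbn [map fold_right].
    replace (1 + n)%nat with (S n) by lia.
    rewrite !plus_IZR, !mult_IZR. field. auto.
Qed.

Lemma ds_eq h K : (0 < K)%Z ->
  dedekind_sum h K = (IZR (2*h*(K-1)*(2*K-1) - 3*K*(K-1)) - 12 * IZR (Tt h K)) / (12 * IZR K).
Proof.
  intros HK. unfold dedekind_sum, Tt.
  assert (HK' : IZR K <> 0) by (apply not_0_IZR; lia).
  replace (Z.to_nat K - 1)%nat with (Z.to_nat (K-1)) by lia.
  rewrite ds_gen by auto.
  pose proof (sZ_id (Z.to_nat (K-1))) as H1. pose proof (sZ_sq (Z.to_nat (K-1))) as H2.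
  rewrite Z2Nat.id in H1, H2 by lia.
  apply (f_equal IZR) in H1. apply (f_equal IZR) in H2.
  repeat (rewrite mult_IZR in H1 || rewrite plus_IZR in H1 || rewrite minus_IZR in H1).
  repeat (rewrite mult_IZR in H2 || rewrite plus_IZR in H2 || rewrite minus_IZR in H2).
  repeat (rewrite mult_IZR || rewrite plus_IZR || rewrite minus_IZR).
  assert (E1 : IZR (sZ (fun r => r) (Z.to_nat (K-1))) = (IZR K - 1) * (IZR K - 1 + 1) / 2) by (apply (Rmult_eq_reg_l 2); [rewrite H1; field|lra]).
  assert (E2 : IZR (sZ (fun r => (r*r)%Z) (Z.to_nat (K-1))) = (IZR K - 1) * (IZR K - 1 + 1) * (2*(IZR K - 1) + 1) / 6) by (apply (Rmult_eq_reg_l 6); [rewrite H2; field|lra]).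
  rewrite E1, E2. field. auto.
Qed.

Lemma cexpi_mult a b : Cmult (cexpi a) (cexpi b) = cexpi (a + b).
Proof. unfold cexpi, Cmult; simpl. rewrite cos_plus, sin_plus. f_equal; ring. Qed.

Lemma cexpi_div a b : Cdiv (cexpi a) (cexpi b) = cexpi (a - b).
Proof.
  unfold Cdiv. replace (a - b) with (a + - b) by ring. rewrite <- cexpi_mult. f_equal.
  unfold cexpi, Cinv; simpl. rewrite cos_neg, sin_neg.
  assert (E : cos b * (cos b * 1) + sin b * (sin b * 1) = 1) by (pose proof (sin2_cos2 b) as S; unfold Rsqr in S; nra).
  rewrite E. f_equal; field.
Qed.

Lemma cexpi_opp a : Copp (cexpi a) = cexpi (a + PI).
Proof. unfold cexpi, Copp; simpl. rewrite cos_plus, sin_plus, cos_PI, sin_PI. f_equal; ring. Qed.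

Lemma cexpi_per a b n : a - b = 2 * PI * IZR n -> cexpi a = cexpi b.
Proof.
  intros H. destruct (Z_le_gt_dec 0 n) as [Hn|Hn].
  - replace a with (b + 2 * INR (Z.to_nat n) * PI).
    + unfold cexpi. rewrite cos_period, sin_period. reflexivity.
    + rewrite INR_IZR_INZ, Z2Nat.id by lia. lra.
  - replace b with (a + 2 * INR (Z.to_nat (-n)) * PI).
    + unfold cexpi. rewrite cos_period, sin_period. reflexivity.
    + rewrite INR_IZR_INZ, Z2Nat.id by lia. rewrite opp_IZR. lra.
Qed.

Ltac pushIZR := repeat (rewrite mult_IZR || rewrite plus_IZR || rewrite minus_IZR || rewrite opp_IZR).

Theorem lemma3p3 (k h h' : Z) :
  (0 < k)%Z -> Z.gcd k 6 = 2%Z -> Z.gcd h k = 1%Z ->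
  (4 * k | h * h' + 1)%Z -> (3 | h')%Z ->
  Cdiv (Cmult (Cmult (omega (3 * h) (k / 2)) (omega h (k / 2))) (omega h k))
       (omega (3 * h) k)
  = cexpi (2 * PI / (36 * IZR k) *
           (IZR h * (9 + 9 * IZR k) + IZR h' * (-5 + 2 * IZR k ^ 2)))
  /\
  Cdiv (Cmult (Cmult (omega (3 * h) k) (omega h (k / 2))) (omega h k))
       (Cmult (Cmult (omega (3 * h) (k / 2)) (omega (3 * h) (k / 2)))
              (omega (3 * h) (k / 2)))
  = Copp (cexpi (- (2 * PI / (18 * IZR k)) *
           (IZR h * (9 + 9 * IZR k) + IZR h' * (1 - IZR k ^ 2)))).
Proof.
  intros Hk Hg Hhk Hd H3.
  assert (H2k : (2 | k)%Z) by (rewrite <- Hg; apply Z.gcd_divide_l).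
  destruct H2k as [m Hm].
  assert (Hm0 : (0 < m)%Z) by lia.
  assert (Hkm : k = (2*m)%Z) by lia. clear Hm. subst k.
  replace ((2*m)/2)%Z with m by (symmetry; apply (div_eq _ _ _ 0); lia).
  assert (R3m : rel_prime 3 m).
  { apply prime_rel_prime; [apply prime_3|]. intros D.
    assert (X : (3 | Z.gcd (2*m) 6)%Z) by (apply Z.gcd_greatest; [apply Z.divide_mul_r; auto| exists 2%Z; lia]).
    rewrite Hg in X. destruct X as [x Hx]. lia. }
  assert (Hodd : exists a, h = (2*a+1)%Z).
  { destruct (Z.Even_or_Odd h) as [[b Hb]|[b Hb]]; [|exists b; auto].
    exfalso. assert (X : (2 | Z.gcd h (2*m))%Z) by (apply Z.gcd_greatest; [exists b; lia| exists m; lia]).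
    rewrite Hhk in X. destruct X as [x Hx]. lia. }
  destruct Hodd as [a Ha].
  assert (Rhk : rel_prime h (2*m)) by (apply Zgcd_1_rel_prime; auto).
  assert (Rhm : rel_prime h m).
  { apply rel_prime_bezout in Rhk. destruct Rhk as [u v Huv].
    apply bezout_rel_prime. apply (Bezout_intro _ _ _ u (2*v)). lia. }
  assert (R32 : rel_prime 3 2) by (apply bezout_rel_prime; apply (Bezout_intro _ _ _ 1 (-1)); lia).
  assert (R32m : rel_prime 3 (2*m)) by (apply rel_prime_mult; auto).
  assert (R3hm : rel_prime (3*h) m) by (apply rel_prime_sym, rel_prime_mult; apply rel_prime_sym; auto).
  assert (R3h2m : rel_prime (3*h) (2*m)) by (apply rel_prime_sym, rel_prime_mult; apply rel_prime_sym; auto).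
  assert (Hd8 : (8*m | h*h'+1)%Z) by (replace (8*m)%Z with (4*(2*m))%Z by lia; auto).
  pose proof (F1 (3*h) m Hm0 R3hm) as E1.
  pose proof (F1 h m Hm0 Rhm) as E2.
  pose proof (F1 h (2*m) ltac:(lia) Rhk) as E3.
  pose proof (F1 (3*h) (2*m) ltac:(lia) R3h2m) as E4.
  assert (HQo : (m mod 2 = 1)%Z -> (4 | Qq (3*h) m - 2*Gg (3*h) m)%Z /\ (4 | Qq h m - 2*Gg h m)%Z).
  { intros Hp. pose proof (Z.div_mod m 2 ltac:(lia)).
    split; [apply (Qmod4_odd m (3*h) (m/2) (3*a+1))|apply (Qmod4_odd m h (m/2) a)]; auto;
      try lia; apply Z.div_pos; lia. }
  assert (HQe : (m mod 2 = 0)%Z -> (4 | Qq (3*h) m - 2*Gg (3*h) m - (3*a+1)*(3*a+1))%Z /\ (4 | Qq h m - 2*Gg h m - a*a)%Z).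
  { intros Hp. pose proof (Z.div_mod m 2 ltac:(lia)).
    split; [apply (Qmod4_even m (3*h) (m/2-1) (3*a+1))|apply (Qmod4_even m h (m/2-1) a)]; auto; lia. }
  assert (HQ3 : (4 | Qq h (2*m) - 2*Gg h (2*m) - a*a)%Z) by (apply (Qmod4_even (2*m) h (m-1) a); auto; lia).
  assert (HQ4 : (4 | Qq (3*h) (2*m) - 2*Gg (3*h) (2*m) - (3*a+1)*(3*a+1))%Z) by (apply (Qmod4_even (2*m) (3*h) (m-1) (3*a+1)); auto; lia).
  assert (HF1 : (2 | Gg (3*h) m - Gg h m - ((m-1)/2 - m/3))%Z) by (rewrite <- G3_lemma by auto; apply fold_lemma; auto).
  assert (HF2 : (2 | Gg (3*h) (2*m) - Gg h (2*m) - ((2*m-1)/2 - (2*m)/3))%Z) by (rewrite <- G3_lemma by (auto || lia); apply fold_lemma; auto; try lia).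
  destruct (core m h h' a _ _ _ _ _ _ _ _ _ _ _ _ Hm0 R3m Rhm Ha Hd8 H3 E1 E2 E3 E4 HQo HQe HQ3 HQ4 HF1 HF2)
    as [[z1 Hz1] [z2 Hz2]].
  assert (HmR : IZR m <> 0) by (apply not_0_IZR; lia).
  unfold omega. rewrite !ds_eq by lia.
  rewrite !cexpi_mult, !cexpi_div, cexpi_opp.
  split.
  - apply (cexpi_per _ _ z1).
    apply (f_equal IZR) in Hz1. unfold C1e, Az in Hz1. rewrite mult_IZR in Hz1.
    assert (Z1 : IZR z1 = IZR (6 * (2 * (3 * h) * (m - 1) * (2 * m - 1) - 3 * m * (m - 1)) +
         6 * (2 * h * (m - 1) * (2 * m - 1) - 3 * m * (m - 1)) +
         3 * (2 * h * (2 * m - 1) * (2 * (2 * m) - 1) - 3 * (2 * m) * (2 * m - 1)) -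
         3 * (2 * (3 * h) * (2 * m - 1) * (2 * (2 * m) - 1) - 3 * (2 * m) * (2 * m - 1)) -
         72 * (Tt (3 * h) m + Tt h m) - 36 * (Tt h (2 * m) - Tt (3 * h) (2 * m)) -
         2 * (h * (9 + 18 * m) + h' * (8 * m * m - 5))) / IZR (144 * m)).
    { rewrite Hz1. rewrite !mult_IZR. field. auto. }
    rewrite Z1. pushIZR. field. auto.
  - apply (cexpi_per _ _ z2).
    apply (f_equal IZR) in Hz2. unfold C2e, Az in Hz2. rewrite mult_IZR in Hz2.
    match type of Hz2 with IZR ?X = _ => assert (Z2 : IZR z2 = IZR X / IZR (144 * m)) end.
    { rewrite Hz2. rewrite !mult_IZR. field. auto. }
    rewrite Z2. pushIZR. field. auto.
Qed.
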